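(* Let $n_0, L\in\mathbb{N}_+$, $n_1,\dots,n_L\in\mathbb{N}_+$, and let $h_l\in\mathrm{RL}(n_{l-1},n_l)$ for $l=1,\dots,L$, with $\mathbf{h}=(h_1,\dots,h_L)$. Let $\gamma\in\Gamma$. Then $$|\mathcal{S}_{\mathbf{h}}|\le\big\|\varphi^{(\gamma)}_{n_L}\circ\dots\circ\varphi^{(\gamma)}_{n_1}({\rm e}_{n_0})\big\|_1 .$$
   Context: $\mathbb{N}=\{0,1,2,\dots\}$, $\mathbb{N}_+=\mathbb{N}\setminus\{0\}$, $\sigma(x)=\max(0,x)$. For $n,n'\in\mathbb{N}_+$, $\mathrm{RL}(n,n')$ is the set of maps $h:\mathbb{R}^n\to\mathbb{R}^{n'}$ of the form $h(x)_i=\sigma(\langle x,w_i\rangle+b_i)$, $i=1,\dots,n'$, for some matrix $W\in\mathbb{R}^{n'\times n}$ with rows $w_i$ and $b\in\mathbb{R}^{n'}$. The signature $S_h(x)\in\{0,1\}^{n'}$ has $S_h(x)_i=1$ iff $\langle x,w_i\rangle+b_i>0$; $\mathcal{S}_h=\{S_h(x):x\in\mathbb{R}^n\}$. By convention $\mathrm{RL}(0,n')$ consists of the constant maps $\{0\}\to\mathbb{R}^{n'}$, and for such $h$ one sets $\mathcal{H}_{n'}(\mathcal{S}_h)={\rm e}_0$. For $\mathbf{h}=(h_1,\dots,h_L)$ the multi signature of $x\in\mathbb{R}^{n_0}$ is $S_{\mathbf{h}}(x)=(S_{h_1}(x),S_{h_2}(h_1(x)),\dots,S_{h_L}(h_{L-1}\circ\dots\circ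 h_1(x)))$ and $\mathcal{S}_{\mathbf{h}}=\{S_{\mathbf{h}}(x):x\in\mathbb{R}^{n_0}\}$. For $s\in\{0,1\}^{k}$, $|s|=\sum_i s_i$. Histograms: $V$ is the set of sequences $v=(v_j)_{j\in\mathbb{N}}$ of elements of $\mathbb{N}$ with $\sum_j v_j<\infty$; $\|v\|_1=\sum_j v_j$; ${\rm e}_i\in V$ has $({\rm e}_i)_j=\delta_{ij}$. For $v,w\in V$, $v\preceq w$ iff $\sum_{j\ge J}v_j\le\sum_{j\ge J}w_j$ for all $J\in\mathbb{N}$. For a finite family $(v^{(i)})_{i\in I}$ in $V$, $\max_{i}(v^{(i)})\in V$ is defined by $\max_i(v^{(i)})_J=\max_i\sum_{j\ge J}v^{(i)}_j-\max_i\sum_{j\ge J+1}v^{(i)}_j$. For $\mathcal{S}\subseteq\{0,1\}^{n'}$, the activation histogram is $\mathcal{H}_{n'}(\mathcal{S})=(|\{s\in\mathcal{S}:|s|=j\}|)_{j\in\mathbb{N}}$. Bound condition: $\Gamma$ is the set of families $\gamma=(\gamma_{n,n'})_{n'\in\mathbb{N}_+,\,n\in\{0,\dots,n'\}}$ of elements of $V$ such that (i) $\max\{\mathcal{H}_{n'}(\mathcal{S}_h):h\in\mathrm{RL}(n,n')\}\preceq\gamma_{n,n'}$ for all $n'\in\mathbb{N}_+$, $n\in\{0,\dots,n'\}$, and (ii) $n\le\tilde n\le n'$ implies $\gamma_{n,n'}\preceq\gamma_{\tilde n,n'}$. Clipping: for $i^*\in\mathbb{N}$, $\mathrm{cl}_{i^*}:V\to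 V$, $\mathrm{cl}_{i^*}(v)_i=v_i$ for $i<i^*$, $=\sum_{j\ge i^*}v_j$ for $i=i^*$, $=0$ for $i>i^*$. Transition map: for $n'\in\mathbb{N}_+$, $\gamma\in\Gamma$, $\varphi^{(\gamma)}_{n'}:V\to V$, $\varphi^{(\gamma)}_{n'}(v)=\sum_{n=0}^\infty v_n\,\mathrm{cl}_{\min(n,n')}(\gamma_{\min(n,n'),n'})$. *)

(* Defs.v *)
From HB Require Import structures.
From mathcomp Require Import all_boot all_order all_algebra.
From mathcomp Require Import boolp reals.
Set Implicit Arguments. Unset Strict Implicit. Unset Printing Implicit Defensive.
Import Order.TTheory GRing.Theory Num.Theory.

(* ---------- Histograms: V represented by finite lists, v_j = nth 0 v j ---- *)
Definition hist := seq nat.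
Definition hcoef (v : hist) (j : nat) : nat := nth 0 v j.
Definition htail (v : hist) (J : nat) : nat := sumn (drop J v).
Definition hnorm1 (v : hist) : nat := sumn v.
Definition he (i : nat) : hist := rcons (nseq i 0) 1.
Definition hle (v w : hist) : Prop := forall J : nat, htail v J <= htail w J.
Definition hmaxT (fam : seq hist) (J : nat) : nat := \max_(v <- fam) htail v J.
Definition hmax (fam : seq hist) : hist :=
  mkseq (fun J => hmaxT fam J - hmaxT fam J.+1) (\max_(v <- fam) size v).
Definition hadd (v w : hist) : hist :=
  mkseq (fun k => hcoef v k + hcoef w k) (maxn (size v) (size w)).
Definition hscale (c : nat) (v : hist) : hist := map (muln c) v.
Definition hclip (istar : nat) (v : hist) : hist :=
  mkseq (fun i => if i < istar then hcoef v i else htail v istar) istar.+1.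

Definition relu {R : realType} (t : R) : R := Num.max 0%R t.

Definition preact {R : realType} (n n' : nat) (W : 'I_n' -> 'I_n -> R)
  (b : 'I_n' -> R) (x : 'I_n -> R) (i : 'I_n') : R :=
  (\sum_(j < n) x j * W i j + b i)%R.

Definition signature {R : realType} (n n' : nat) (W : 'I_n' -> 'I_n -> R)
  (b : 'I_n' -> R) (x : 'I_n -> R) : {ffun 'I_n' -> bool} :=
  [ffun i => (0 < preact W b x i)%R].

Definition sigset {R : realType} (n n' : nat) (W : 'I_n' -> 'I_n -> R)
  (b : 'I_n' -> R) : {set {ffun 'I_n' -> bool}} :=
  [set s | `[< exists x : 'I_n -> R, signature W b x = s >]].

Definition weight (k : nat) (s : {ffun 'I_k -> bool}) : nat := \sum_(i < k) nat_of_bool (s i).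

Definition acthist (n' : nat) (S : {set {ffun 'I_n' -> bool}}) : hist :=
  mkseq (fun j => #|[set s in S | weight s == j]|) n'.+1.

(* the set {H_{n'}(S_h) : h in RL(n,n')}, with the convention for n = 0 *)
Definition RLhists (R : realType) (n n' : nat) (v : hist) : Prop :=
  if n == 0 then v = he 0
  else exists (W : 'I_n' -> 'I_n -> R) (b : 'I_n' -> R), v = acthist (sigset W b).

(* gamma in Gamma; gamma n n' stands for gamma_{n,n'} *)
Definition inGamma (R : realType) (gamma : nat -> nat -> hist) : Prop :=
  (forall n' n, 0 < n' -> n <= n' ->
     exists fam : seq hist,
       (forall v, v \in fam <-> RLhists R n n' v) /\ hle (hmax fam) (gamma n n'))
  /\ (forall n' n nt, 0 < n' -> n <= nt -> nt <= n' -> hle (gamma n n') (gamma nt n')).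

Definition phi (gamma : nat -> nat -> hist) (n' : nat) (v : hist) : hist :=
  foldr hadd [::]
    [seq hscale (hcoef v k) (hclip (minn k n') (gamma (minn k n') n')) | k <- iota 0 (size v)].

Definition phi_comp (gamma : nat -> nat -> hist) (ns : nat -> nat) (L : nat) : hist :=
  foldl (fun v l => phi gamma (ns l) v) (he (ns 0)) (iota 1 L).

(* ---------- networks: layer l+1 maps R^{ns l} -> R^{ns (l+1)} ---------- *)
Fixpoint forward {R : realType} (ns : nat -> nat)
  (Ws : forall l : nat, 'I_(ns l.+1) -> 'I_(ns l) -> R)
  (bs : forall l : nat, 'I_(ns l.+1) -> R) (x : 'I_(ns 0) -> R) (l : nat)
  : 'I_(ns l) -> R :=
  match l return 'I_(ns l) -> R with
  | 0 => x
  | k.+1 => fun i => relu (preact (Ws k) (bs k) (@forward R ns Ws bs x k) i)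
  end.
Arguments forward {R ns} Ws bs x l _.

Definition multisig {R : realType} (ns : nat -> nat) (L : nat)
  (Ws : forall l : nat, 'I_(ns l.+1) -> 'I_(ns l) -> R)
  (bs : forall l : nat, 'I_(ns l.+1) -> R) (x : 'I_(ns 0) -> R)
  : {dffun forall l : 'I_L, {ffun 'I_(ns (nat_of_ord l).+1) -> bool}} :=
  [ffun l : 'I_L => @signature R (ns (nat_of_ord l)) (ns (nat_of_ord l).+1) (Ws (nat_of_ord l)) (bs (nat_of_ord l)) (forward Ws bs x (nat_of_ord l))].

Definition multisigset {R : realType} (ns : nat -> nat) (L : nat)
  (Ws : forall l : nat, 'I_(ns l.+1) -> 'I_(ns l) -> R)
  (bs : forall l : nat, 'I_(ns l.+1) -> R) :=
  [set s | `[< exists x : 'I_(ns 0) -> R, multisig L Ws bs x = s >]].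

(* Main.v *)
Require Import Defs.
From HB Require Import structures.
From mathcomp Require Import all_boot all_order all_algebra.
From mathcomp Require Import boolp reals.
From mathcomp Require Import zify.
Set Implicit Arguments. Unset Strict Implicit. Unset Printing Implicit Defensive.

Lemma hcoef_nil j : hcoef [::] j = 0.
Proof. by rewrite /hcoef nth_nil. Qed.

Lemma htailE v J m : size v <= m ->
  htail v J = \sum_(k < m) (J <= k) * hcoef v k.
Proof.
elim: v J m => [|a v IH] J m.
  by move=> _; rewrite /htail /= big1 // => k _; rewrite hcoef_nil muln0.
case: m => // m; rewrite [size _]/= ltnS => Hm.
rewrite big_ord_recl.
have E : forall P : nat -> nat, \sum_(i < m) P (lift ord0 i) = \sum_(i < m) P i.+1.
  by move=> P; apply eq_bigr => i _; rewrite lift0.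
rewrite (E (fun k => (J <= k) * hcoef (a :: v) k)).
case: J => [|J].
  have -> : \sum_(i<m) (0 <= i.+1) * hcoef (a :: v) i.+1 = \sum_(i<m) (0 <= i) * hcoef v i by [].
  by rewrite -(IH 0 m Hm) /htail !drop0 mul1n.
have -> : \sum_(i<m) (J.+1 <= i.+1) * hcoef (a :: v) i.+1 = \sum_(i<m) (J <= i) * hcoef v i by [].
by rewrite -(IH J m Hm) mul0n add0n.
Qed.

Lemma sum_ext v m (G : nat -> nat) : size v <= m ->
  \sum_(k < m) hcoef v k * G k = \sum_(k < size v) hcoef v k * G k.
Proof.
move=> Hm; rewrite (big_ord_widen m (fun k => hcoef v k * G k) Hm) [RHS]big_mkcond.
apply: eq_bigr => k _; case: ltnP => // Hk.
by rewrite /hcoef nth_default.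
Qed.

Lemma sum_ext2 v m m' (G : nat -> nat) : size v <= m -> size v <= m' ->
  \sum_(k < m) hcoef v k * G k = \sum_(k < m') hcoef v k * G k.
Proof. by move=> H1 H2; rewrite !sum_ext. Qed.

Lemma hnorm1E v : hnorm1 v = htail v 0.
Proof. by rewrite /htail drop0. Qed.

Lemma htailS v i : htail v i = hcoef v i + htail v i.+1.
Proof.
rewrite /htail /hcoef; case: (ltnP i (size v)) => H.
  by rewrite (drop_nth 0 H).
by rewrite !drop_oversize ?nth_default //; apply: leqW.
Qed.

Lemma htail_split v J i : J <= i ->
  htail v J = \sum_(k < i) (J <= k) * hcoef v k + htail v i.
Proof.
elim: i => [|i IH]; first by rewrite leqn0 => /eqP ->; rewrite big_ord0.
rewrite leq_eqVlt => /orP [/eqP <-|HJ].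
  by rewrite big1 // => k _; rewrite leqNgt ltn_ord.
rewrite ltnS in HJ; rewrite (IH HJ) big_ord_recr /= (htailS v i) HJ mul1n addnA. by [].
Qed.

Lemma size_hclip i v : size (hclip i v) = i.+1.
Proof. by rewrite size_mkseq. Qed.

Lemma htail_hclip i v J : htail (hclip i v) J = if J <= i then htail v J else 0.
Proof.
have E: forall k, k < i.+1 -> hcoef (hclip i v) k = if k < i then hcoef v k else htail v i.
  by move=> k Hk; rewrite /hcoef nth_mkseq.
rewrite (@htailE _ J i.+1) ?size_hclip // big_ord_recr /= E // ltnn.
under eq_bigr => k _ do rewrite (E k (leqW (ltn_ord k))) (ltn_ord k).
case: ifP => HJ.
  by rewrite mul1n (htail_split v HJ).
rewrite mul0n addn0 big1 // => k _.
by rewrite leqNgt (ltn_trans (ltn_ord k)) // ltnNge HJ.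
Qed.

Lemma hcoef_he k j : hcoef (he k) j = (j == k).
Proof.
rewrite /hcoef /he nth_rcons size_nseq nth_nseq.
case: ltngtP => //= H; by rewrite if_same.
Qed.

Lemma size_he k : size (he k) = k.+1.
Proof. by rewrite /he size_rcons size_nseq. Qed.

Lemma hnorm1_he k : hnorm1 (he k) = 1.
Proof.
rewrite hnorm1E (htailE 0 (leqnn _)) size_he big_ord_recr /= hcoef_he eqxx.
by rewrite big1 // => j _; rewrite hcoef_he (ltn_eqF (ltn_ord j)) muln0.
Qed.

Lemma htail_he0 : htail (he 0) 0 = 1.
Proof. by rewrite -hnorm1E hnorm1_he. Qed.

Lemma hcoef_hadd v w j : hcoef (hadd v w) j = hcoef v j + hcoef w j.
Proof.
rewrite /hadd /hcoef; case: (ltnP j (maxn (size v) (size w))) => H.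
  by rewrite nth_mkseq.
rewrite nth_default ?size_mkseq // !nth_default //.
  by apply: leq_trans H; apply: leq_maxr.
by apply: leq_trans H; apply: leq_maxl.
Qed.

Lemma hcoef_hscale c v j : hcoef (hscale c v) j = c * hcoef v j.
Proof.
rewrite /hscale /hcoef; case: (ltnP j (size v)) => H.
  by rewrite (nth_map 0).
by rewrite !nth_default ?size_map // muln0.
Qed.

Lemma size_hadd v w : size (hadd v w) = maxn (size v) (size w).
Proof. by rewrite size_mkseq. Qed.

Lemma size_hscale c v : size (hscale c v) = size v.
Proof. by rewrite size_map. Qed.

Lemma abel_sum m (u t : nat -> nat) : (forall k, t k <= t k.+1) ->
  \sum_(k < m) u k * t k =
  \sum_(K < m) (t K - t K.-1 * (0 < K)) * \sum_(k < m) (K <= k) * u k.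
Proof.
move=> Ht.
have tmono : forall a b, a <= b -> t a <= t b.
  move=> a b /subnK <-; elim: (b - a) => [|n IH] //.
  by rewrite addSn (leq_trans IH).
have tel : forall n, \sum_(K < n.+1) (t K - t K.-1 * (0 < K)) = t n.
  elim=> [|n IH]; first by rewrite big_ord_recr big_ord0 /= muln0 subn0.
  rewrite big_ord_recr /= IH muln1 subnKC //.
elim: m => [|m IH]; first by rewrite !big_ord0.
rewrite big_ord_recr /= IH.
have E : forall K : nat, \sum_(k < m.+1) (K <= k) * u k =
   \sum_(k < m) (K <= k) * u k + (K <= m) * u m.
  by move=> K; rewrite big_ord_recr.
under [in RHS]eq_bigr => K _ do rewrite E mulnDr.
rewrite big_split big_ord_recr /=.
have -> : \sum_(k < m) (m <= k) * u k = 0 by rewrite big1 // => k _; rewrite leqNgt ltn_ord.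
rewrite muln0 addn0.
congr (_ + _).
under eq_bigr => i _ do rewrite leq_ord mul1n.
by rewrite -big_distrl tel mulnC.
Qed.

Lemma abel_le m (u w t : nat -> nat) : (forall k, t k <= t k.+1) ->
  (forall J, \sum_(k < m) (J <= k) * u k <= \sum_(k < m) (J <= k) * w k) ->
  \sum_(k < m) u k * t k <= \sum_(k < m) w k * t k.
Proof.
move=> Ht Hj; rewrite !(abel_sum _ _ Ht).
by apply: leq_sum => K _; apply: leq_mul.
Qed.

Lemma sum_pred1 (m a : nat) (N : nat -> nat) :
  \sum_(k < m) (a == k :> nat) * N k = (a < m) * N a.
Proof.
elim: m => [|m IH]; first by rewrite big_ord0.
rewrite big_ord_recr /= IH (ltnS a m) (leq_eqVlt a m).
case: (ltngtP a m) => H /=; rewrite ?mul0n ?addn0 ?mul1n //.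
by rewrite H add0n.
Qed.

Definition cc (gamma : nat -> nat -> hist) n' k := hclip (minn k n') (gamma (minn k n') n').
Definition Phi gamma (ns : nat -> nat) L v := foldl (fun v l => phi gamma (ns l) v) v (iota 1 L).

Lemma foldr_hadd_coef (F : nat -> hist) s j :
  hcoef (foldr hadd [::] (map F s)) j = \sum_(k <- s) hcoef (F k) j.
Proof.
elim: s => [|a s IH]; first by rewrite big_nil hcoef_nil.
by rewrite big_cons /= hcoef_hadd IH.
Qed.

Lemma phi_coef gamma n' v j :
  hcoef (phi gamma n' v) j = \sum_(k < size v) hcoef v k * hcoef (cc gamma n' k) j.
Proof.
rewrite /phi foldr_hadd_coef.
have -> : iota 0 (size v) = index_iota 0 (size v) by rewrite /index_iota subn0.
rewrite big_mkord; apply: eq_bigr => k _.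
by rewrite hcoef_hscale.
Qed.

Lemma size_foldr_hadd (F : nat -> hist) s b :
  (forall k, size (F k) <= b) -> size (foldr hadd [::] (map F s)) <= b.
Proof.
move=> H; elim: s => [|a s IH] //=.
by rewrite size_hadd geq_max H IH.
Qed.

Lemma size_phi gamma n' v : size (phi gamma n' v) <= n'.+1.
Proof.
apply: size_foldr_hadd => k.
by rewrite size_hscale size_hclip ltnS geq_minr.
Qed.

Lemma size_cc gamma n' k : size (cc gamma n' k) <= n'.+1.
Proof. by rewrite size_hclip ltnS geq_minr. Qed.

Lemma phi_he_coef gamma n' k j :
  hcoef (phi gamma n' (he k)) j = hcoef (cc gamma n' k) j.
Proof.
rewrite phi_coef size_he.
under eq_bigr => i _ do rewrite hcoef_he eq_sym.
by rewrite (sum_pred1 k.+1 k (fun i => hcoef (cc gamma n' i) j)) ltnSn mul1n.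
Qed.

Lemma Phi_S gamma ns L v :
  Phi gamma ns L.+1 v = Phi gamma (fun l => ns l.+1) L (phi gamma (ns 1) v).
Proof.
rewrite /Phi /=.
have -> : iota 2 L = map (addn 1) (iota 1 L) by rewrite -iotaDl.
elim: (iota 1 L) (phi gamma (ns 1) v) => [|a s IH] w //=.
Qed.

Lemma T_lin gamma L : forall ns v m, size v <= m ->
  hnorm1 (Phi gamma ns L v) = \sum_(k < m) hcoef v k * hnorm1 (Phi gamma ns L (he k)).
Proof.
elim: L => [|L IH] ns v m Hm.
  rewrite /Phi /= hnorm1E (htailE 0 Hm).
  by apply: eq_bigr => k _; rewrite hnorm1_he muln1 mul1n.
rewrite Phi_S (IH _ _ (ns 1).+1 (size_phi _ _ _)).
under [in RHS]eq_bigr => k _ do rewrite Phi_S (IH _ _ (ns 1).+1 (size_phi _ _ _)).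
under [in LHS]eq_bigr => j _ do rewrite phi_coef big_distrl.
rewrite exchange_big /= (sum_ext (fun k => \sum_(k0 < (ns 1).+1) hcoef (phi gamma (ns 1) (he k)) k0 * hnorm1 (Phi gamma (fun l => ns l.+1) L (he k0))) Hm).
apply: eq_bigr => k _; rewrite big_distrr; apply: eq_bigr => j _.
by rewrite phi_he_coef -mulnA.
Qed.

Definition NN gamma ns L k := hnorm1 (Phi gamma ns L (he k)).

Lemma cc_mono (R : realType) gamma (Hg : inGamma R gamma) n' k k' J :
  0 < n' -> k <= k' -> htail (cc gamma n' k) J <= htail (cc gamma n' k') J.
Proof.
move=> Hn Hk; rewrite /cc !htail_hclip.
have Hmin : minn k n' <= minn k' n' by rewrite leq_min geq_minr andbT (leq_trans (geq_minl _ _) Hk).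
case: ifP => // HJ.
rewrite (leq_trans HJ Hmin).
case: Hg => _ /(_ n' (minn k n') (minn k' n') Hn Hmin (geq_minr _ _)).
by move=> /(_ J).
Qed.

Lemma N_mono (R : realType) gamma (Hg : inGamma R gamma) L : forall ns,
  (forall l, 0 < l <= L -> 0 < ns l) -> forall k, NN gamma ns L k <= NN gamma ns L k.+1.
Proof.
elim: L => [|L IH] ns Hns k; first by rewrite /NN /Phi /= !hnorm1_he.
rewrite /NN !Phi_S !(T_lin _ _ _ (size_phi _ _ _)).
under eq_bigr => j _ do rewrite phi_he_coef.
under [in X in _ <= X]eq_bigr => j _ do rewrite phi_he_coef.
apply: (@abel_le _ (fun j => hcoef (cc gamma (ns 1) k) j) (fun j => hcoef (cc gamma (ns 1) k.+1) j) (fun j => NN gamma (fun l => ns l.+1) L j)).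
  apply: IH => l /andP [H1 H2]; apply: Hns; apply/andP; split => //.
move=> J; rewrite -!(htailE J (size_cc _ _ _)).
apply: (cc_mono Hg); last by [].
by apply: Hns.
Qed.

Lemma htail_decr v j : htail v j.+1 <= htail v j.
Proof. by rewrite (htailS v j) leq_addl. Qed.

Lemma tele_sum (T : nat -> nat) (HT : forall k, T k.+1 <= T k) m J :
  \sum_(k < m) (J <= k) * (T k - T k.+1) = T (minn J m) - T m.
Proof.
have Tm : forall a b, a <= b -> T b <= T a.
  move=> a b /subnK <-; elim: (b - a) => [|n IH] //.
  by rewrite addSn (leq_trans (HT _) IH).
elim: m => [|m IH]; first by rewrite big_ord0 minn0 subnn.
rewrite big_ord_recr /= IH.
case: (leqP J m) => HJ.
  rewrite mul1n (minn_idPl (leqW HJ)).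
  have := Tm _ _ HJ; have := HT m; lia.
rewrite mul0n addn0 (minn_idPr HJ) !subnn //.
Qed.

Lemma htail_hmax fam v J : v \in fam -> htail v J <= htail (hmax fam) J.
Proof.
move=> Hv.
set T := hmaxT fam.
set m := \max_(w <- fam) size w.
have HT : forall k, T k.+1 <= T k.
  move=> k; apply/bigmax_leqP_seq => w Hw _.
  apply: leq_trans (htail_decr w k) _.
  rewrite /T /hmaxT; exact: (@leq_bigmax_seq _ fam xpredT (fun w => htail w k) w Hw isT).
have Tm : forall a b, a <= b -> T b <= T a.
  move=> a b /subnK <-; elim: (b - a) => [|n IH] //.
  by rewrite addSn (leq_trans (HT _) IH).
have T0 : T m = 0.
  apply/eqP; rewrite -leqn0; apply/bigmax_leqP_seq => w Hw _.
  rewrite /htail drop_oversize //.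
  exact: (@leq_bigmax_seq _ fam xpredT size w Hw isT).
have -> : htail (hmax fam) J = T (minn J m) - T m.
  rewrite (@htailE _ J m) /hmax ?size_mkseq //.
  rewrite -(tele_sum HT); apply: eq_bigr => k _.
  by rewrite /hcoef nth_mkseq.
rewrite T0 subn0.
apply: leq_trans (Tm _ _ (geq_minl J m)).
rewrite /T /hmaxT; exact: (@leq_bigmax_seq _ fam xpredT (fun w => htail w J) v Hv isT).
Qed.

Lemma sum_count (T : Type) (r : seq T) (a : pred T) :
  \sum_(i <- r) (a i : nat) = count a r.
Proof. by elim: r => [|x r IH]; rewrite ?big_nil ?big_cons ?IH. Qed.

Definition ffseq k (s : {ffun 'I_k -> bool}) : seq bool := [seq s i | i <- enum 'I_k].

Lemma size_ffseq k s : size (@ffseq k s) = k.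
Proof. by rewrite size_map size_enum_ord. Qed.

Lemma nth_ffseq k s (i : 'I_k) : nth false (ffseq s) i = s i.
Proof. by rewrite (nth_map i) ?size_enum_ord // nth_ord_enum. Qed.

Lemma count_ffseq k s : count id (@ffseq k s) = weight s.
Proof.
rewrite count_map -sum_count big_enum /weight.
by apply: eq_bigl => i.
Qed.

Lemma ffseq_inj k : injective (@ffseq k).
Proof.
move=> s t H; apply/ffunP => i.
by rewrite -!nth_ffseq H.
Qed.

Lemma weight_le k (s : {ffun 'I_k -> bool}) : weight s <= k.
Proof.
rewrite /weight; apply: (@leq_trans (\sum_(i < k) 1)).
  by apply: leq_sum => i _; case: (s i).
by rewrite sum1_card card_ord.
Qed.

Lemma card_sum (T : finType) (S : {set T}) (P : pred T) :
  #|[set s in S | P s]| = \sum_(s in S) (P s : nat).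
Proof.
rewrite -sum1dep_card [RHS]big_mkcond [LHS]big_mkcond.
by apply: eq_bigr => s _; case: (s \in S); case: (P s).
Qed.

Lemma htail_acthist n' (S : {set {ffun 'I_n' -> bool}}) J :
  htail (acthist S) J = #|[set s in S | J <= weight s]|.
Proof.
rewrite (@htailE _ J n'.+1) /acthist ?size_mkseq //.
under eq_bigr => k _ do rewrite /hcoef nth_mkseq // card_sum big_distrr.
rewrite exchange_big card_sum; apply: eq_bigr => s _.
have := sum_pred1 n'.+1 (weight s) (fun k => J <= k).
rewrite ltnS weight_le mul1n => <-.
by apply: eq_bigr => k _; rewrite mulnC eq_sym.
Qed.

Lemma count_card k (S : {set {ffun 'I_k -> bool}}) (P : pred (seq bool)) F :
  uniq F -> (forall f, f \in F -> exists2 s, s \in S & f = ffseq s) ->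
  count P F <= #|[set s in S | P (ffseq s)]|.
Proof.
move=> Fu HF.
set ffof := fun f : seq bool => [ffun i : 'I_k => nth false f i].
have K : forall f, f \in F -> ffseq (ffof f) = f.
  move=> f /HF [s _ ->]; congr ffseq; apply/ffunP => i.
  by rewrite ffunE nth_ffseq.
have EF : map (@ffseq k) (map ffof F) = F.
  rewrite -map_comp; transitivity (map id F); last exact: map_id.
  by apply/eq_in_map => f Hf; exact: K.
have Gu : uniq (map ffof F) by apply: (@map_uniq _ _ (@ffseq k)); rewrite EF.
rewrite -EF count_map -size_filter cardE.
apply: uniq_leq_size; first exact: filter_uniq.
move=> s; rewrite mem_filter mem_enum => /andP [Ps /mapP [f Hf Es]].
have [s' Hs' Ef] := HF f Hf.
have E' : s = s' by rewrite Es /ffof Ef; apply/ffunP => i; rewrite ffunE nth_ffseq.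
by rewrite inE E' Hs' -E'.
Qed.

Import Order.TTheory GRing.Theory Num.Theory.
Local Open Scope ring_scope.

Definition param (R : realType) n d (X : ('I_n -> R) -> Prop) :=
  exists (M : 'I_n -> 'I_d -> R) (c : 'I_n -> R),
    forall x, X x -> exists y : 'I_d -> R, forall i, x i = preact M c y i.

Lemma relu_if (R : realType) (t : R) : relu t = if 0 < t then t else 0.
Proof. by []. Qed.

Lemma reparam (R : realType) n n' d (W : 'I_n' -> 'I_n -> R) b (M : 'I_n -> 'I_d -> R) c y i :
  preact W b (preact M c y) i =
  preact (fun i k => \sum_j M j k * W i j) (fun i => \sum_j c j * W i j + b i) y i.
Proof.
rewrite /preact addrA; congr (_ + _).
under eq_bigr => j _ do rewrite mulrDl big_distrl /=.
rewrite big_split /=; congr (_ + _).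
rewrite exchange_big /=; apply: eq_bigr => k _.
by rewrite big_distrr /=; apply: eq_bigr => j _; rewrite mulrA.
Qed.

Lemma sig_eq (R : realType) n n' m (W : 'I_n' -> 'I_n -> R) b (W' : 'I_n' -> 'I_m -> R) b' x y :
  (forall i, preact W b x i = preact W' b' y i) -> signature W b x = signature W' b' y.
Proof. by move=> H; apply/ffunP => i; rewrite !ffunE H. Qed.

Lemma preact_id (R : realType) n (z : 'I_n -> R) i :
  preact (fun i j => (i == j)%:R) (fun _ => 0) z i = z i.
Proof.
rewrite /preact addr0 (bigD1 i) //= eqxx mulr1 big1 ?addr0 // => j /negbTE.
by rewrite eq_sym => ->; rewrite mulr0.
Qed.

Lemma preact_ext (R : realType) n n' (W : 'I_n' -> 'I_n -> R) b x x' i :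
  (forall j, x j = x' j) -> preact W b x i = preact W b x' i.
Proof. by move=> H; rewrite /preact; congr (_ + _); apply: eq_bigr => j _; rewrite H. Qed.

Local Close Scope ring_scope.

Lemma sig_count_RL (R : realType) gamma (Hg : inGamma R gamma) n' r
  (Hn : 0 < n') (Hr : 0 < r) (Hrn : r <= n') (W : 'I_n' -> 'I_r -> R) b F J :
  uniq F -> (forall f, f \in F -> exists z, f = ffseq (signature W b z)) ->
  count (fun f => J <= count id f) F <= htail (gamma r n') J.
Proof.
move=> Fu HF.
have [fam [Hfam Hle]] := Hg.1 n' r Hn Hrn.
apply: leq_trans (Hle J).
apply: leq_trans (htail_hmax J (_ : acthist (sigset W b) \in fam)); last first.
  apply/Hfam; rewrite /RLhists (negbTE (lt0n_neq0 Hr)).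
  by exists W, b.
rewrite htail_acthist.
have -> : [set s in sigset W b | J <= weight s] = [set s in sigset W b | J <= count id (ffseq s)].
  by apply/setP => s; rewrite !inE count_ffseq.
apply: count_card => // f /HF [z ->].
exists (signature W b z) => //.
by rewrite inE; apply/asboolP; exists z.
Qed.

Lemma gamma0 (R : realType) gamma (Hg : inGamma R gamma) n' (Hn : 0 < n') :
  1 <= htail (gamma 0 n') 0.
Proof.
have [fam [Hfam Hle]] := Hg.1 n' 0 Hn (leq0n _).
apply: leq_trans (Hle 0).
rewrite -htail_he0; apply: htail_hmax.
by apply/Hfam.
Qed.

Lemma count_in0 (T : eqType) (P : pred T) F : (forall f, f \in F -> ~~ P f) -> count P F = 0.
Proof.
elim: F => //= a F IH H; rewrite (negbTE (H a (mem_head _ _))) IH // => f Hf.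
by apply: H; rewrite in_cons Hf orbT.
Qed.

Lemma sig_bound (R : realType) gamma (Hg : inGamma R gamma) n n' (Hn : 0 < n') d
  (X : ('I_n -> R) -> Prop) (HX : param d X) (W : 'I_n' -> 'I_n -> R) b F J :
  uniq F -> (forall f, f \in F -> exists x, X x /\ f = ffseq (signature W b x)) ->
  count (fun f => J <= minn (count id f) d) F <= htail (cc gamma n' d) J.
Proof.
move=> Fu HF.
rewrite /cc htail_hclip; case: ifP => HJ; last first.
  rewrite count_in0 // => f /HF [x [_ ->]].
  rewrite -ltnNge; apply: (@leq_ltn_trans (minn d n')); last by rewrite ltnNge HJ.
  rewrite leq_min geq_minr /= count_ffseq.
  exact: leq_trans (geq_minl _ _) (weight_le _).
have Hsub : count (fun f => J <= minn (count id f) d) F <= count (fun f => J <= count id f) F.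
  by apply: sub_count => f /= H; apply: leq_trans H (geq_minl _ _).
apply: leq_trans Hsub _.
have [M [c HMc]] := HX.
case: (posnP d) => [d0|dpos].
  subst d; move: HJ; rewrite min0n leqn0 => /eqP ->.
  apply: leq_trans (count_size _ _) _.
  apply: leq_trans (gamma0 Hg Hn).
  apply: (@leq_trans (size [:: ffseq (signature W b c)])); last by [].
  apply: uniq_leq_size => // f /HF [x [Xx ->]].
  have [y Hy] := HMc x Xx.
  rewrite inE; apply/eqP; congr ffseq; apply: sig_eq => i.
  apply: preact_ext => j; rewrite Hy /preact big_ord0.
  by rewrite GRing.add0r.
case: (leqP d n') => Hdn.

  apply: (sig_count_RL Hg Hn dpos Hdn (W := fun i k => (\sum_j M j k * W i j)%R)
           (b := fun i => (\sum_j c j * W i j + b i)%R)) => // f /HF [x [Xx ->]].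
  have [y Hy] := HMc x Xx.
  exists y; congr ffseq; apply: sig_eq => i.
  by rewrite (preact_ext _ _ _ Hy) reparam.

apply: (sig_count_RL Hg Hn Hn (leqnn _) (W := fun i j : 'I_n' => ((i == j)%:R)%R)
           (b := fun _ => 0%R)) => // f /HF [x [Xx ->]].
exists (preact W b x); congr ffseq; apply: sig_eq => i.
by rewrite preact_id.
Qed.

Lemma card_ffset k (s : {ffun 'I_k -> bool}) : #|[set i | s i]| = weight s.
Proof.
rewrite -sum1dep_card /weight big_mkcond.
by apply: eq_bigr => i _; case: (s i).
Qed.

Lemma layer_param (R : realType) n n' d (X : ('I_n -> R) -> Prop) (HX : param d X)
  (W : 'I_n' -> 'I_n -> R) b f :
  param (minn (count id f) d)
    (fun x1 => exists x, X x /\ ffseq (signature W b x) = f /\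
                         x1 = (fun i => relu (preact W b x i))).
Proof.
case: (pselect (exists x, X x /\ ffseq (signature W b x) = f)) => [[x0 [_ Hx0]]|Hno]; last first.
  exists (fun _ _ => 0%R), (fun _ => 0%R) => x1 [x [Xx [Ef _]]].
  by exfalso; apply: Hno; exists x.
have Hsig : forall x, ffseq (signature W b x) = f -> forall i : 'I_n', nth false f i = (0 < preact W b x i)%R.
  by move=> x <- i; rewrite nth_ffseq ffunE.
set A := [set i : 'I_n' | nth false f i].
have HA : #|A| = count id f.
  rewrite -Hx0 count_ffseq -card_ffset; apply: eq_card => i.
  by rewrite !inE (Hsig x0 Hx0) ffunE.
case: (leqP (count id f) d) => Hcd.
  rewrite -HA.
  exists (fun i k => ((i == enum_val k)%:R)%R), (fun _ => 0%R) => x1 [x [Xx [Ef ->]]].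
  exists (fun k => relu (preact W b x (enum_val k))) => i.
  rewrite [RHS]/preact GRing.addr0.
  rewrite -(big_enum_val (A := mem A) (fun j => relu (preact W b x j) * ((i == j)%:R))%R).
  case Hi: (i \in A).
    rewrite [RHS](bigD1 i) //= eqxx GRing.mulr1 big1 ?GRing.addr0 // => j /andP [_ /negbTE].
    by rewrite eq_sym => ->; rewrite GRing.mulr0.
  rewrite [RHS]big1; last first.
    move=> j Hj; case: eqP => [Eij|_]; last by rewrite GRing.mulr0.
    by move: Hi; rewrite Eij Hj.
  move: Hi; rewrite inE (Hsig x Ef) relu_if => ->; by [].
have [M [c HMc]] := HX.
exists (fun (i : 'I_n') (k : 'I_d) => if nth false f i then \sum_j M j k * W i j else 0)%R,
       (fun i : 'I_n' => if nth false f i then \sum_j c j * W i j + b i else 0)%R => x1 [x [Xx [Ef ->]]].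
have [y Hy] := HMc x Xx.
exists y => i.
rewrite [RHS]/preact (Hsig x Ef i) relu_if; case: ifP => Hp.
  by rewrite (preact_ext _ _ _ Hy) reparam.
by rewrite big1 ?GRing.add0r // => j _; rewrite GRing.mulr0.
Qed.

Fixpoint msl (R : realType) (ns : nat -> nat)
  (Ws : forall l : nat, 'I_(ns l.+1) -> 'I_(ns l) -> R)
  (bs : forall l : nat, 'I_(ns l.+1) -> R) (L : nat) (x : 'I_(ns 0) -> R) {struct L}
  : seq (seq bool) :=
  match L with
  | 0 => [::]
  | L'.+1 => ffseq (signature (Ws 0) (bs 0) x) ::
      @msl R (fun l => ns l.+1) (fun l => Ws l.+1) (fun l => bs l.+1) L' (forward Ws bs x 1)
  end.

Lemma forward_shift (R : realType) (ns : nat -> nat)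
  (Ws : forall l : nat, 'I_(ns l.+1) -> 'I_(ns l) -> R)
  (bs : forall l : nat, 'I_(ns l.+1) -> R) x l :
  @forward R (fun l => ns l.+1) (fun l => Ws l.+1) (fun l => bs l.+1) (forward Ws bs x 1) l
  = forward Ws bs x l.+1.
Proof. by elim: l => [|l IH] //=; rewrite IH. Qed.

Lemma msl_spec (R : realType) L : forall (ns : nat -> nat)
  (Ws : forall l : nat, 'I_(ns l.+1) -> 'I_(ns l) -> R)
  (bs : forall l : nat, 'I_(ns l.+1) -> R) x,
  msl Ws bs L x = [seq ffseq (signature (Ws l) (bs l) (forward Ws bs x l)) | l <- iota 0 L].
Proof.
elim: L => [|L IH] ns Ws bs x //=.
rewrite IH; congr (_ :: _).
rewrite -[1]/(1 + 0) iotaDl -map_comp; apply: eq_map => l /=.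
by rewrite forward_shift.
Qed.

Lemma size_partition (T U : eqType) (g : T -> U) (S : seq T) (F : seq U) :
  uniq F -> (forall t, t \in S -> g t \in F) ->
  size S = \sum_(f <- F) count (fun t => g t == f) S.
Proof.
move=> Fu; elim: S => [|t S IH] H /=.
  by rewrite big1 // => f _.
rewrite big_split /= -IH; last by move=> t' Ht'; apply: H; rewrite in_cons Ht' orbT.
rewrite sum_count.
have -> : count (fun f => g t == f) F = count_mem (g t) F by apply: eq_count => f; rewrite eq_sym.
by rewrite count_uniq_mem // H ?mem_head // add1n.
Qed.

Lemma sum_by_value (T : eqType) (g : T -> nat) (N : nat -> nat) F m :
  (forall f, f \in F -> g f < m) ->
  \sum_(f <- F) N (g f) = \sum_(k < m) count (fun f => g f == k) F * N k.
Proof.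
elim: F => [|a F IH] H.
  by rewrite big_nil big1 // => k _.
rewrite big_cons IH; last by move=> f Hf; apply: H; rewrite in_cons Hf orbT.
under [RHS]eq_bigr => k _ do rewrite /= mulnDl.
by rewrite big_split /= sum_pred1 H ?mem_head // mul1n.
Qed.

Lemma tail_by_value (T : eqType) (g : T -> nat) F m J :
  (forall f, f \in F -> g f < m) ->
  \sum_(k < m) (J <= k) * count (fun f => g f == k) F = count (fun f => J <= g f) F.
Proof.
elim: F => [|a F IH] H.
  by rewrite big1 // => k _; rewrite muln0.
under eq_bigr => k _ do rewrite /= mulnDr mulnC.
rewrite big_split /= (sum_pred1 m (g a) (fun i => nat_of_bool (J <= i))) H ?mem_head // mul1n IH //.
by move=> f Hf; apply: H; rewrite in_cons Hf orbT.
Qed.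

Lemma main_gen (R : realType) gamma (Hg : inGamma R gamma) L : forall (ns : nat -> nat)
  (Ws : forall l : nat, 'I_(ns l.+1) -> 'I_(ns l) -> R)
  (bs : forall l : nat, 'I_(ns l.+1) -> R),
  (forall l, 0 < l <= L -> 0 < ns l) ->
  forall d (X : ('I_(ns 0) -> R) -> Prop), param d X ->
  forall S : seq (seq (seq bool)), uniq S ->
  (forall t, t \in S -> exists x, X x /\ msl Ws bs L x = t) ->
  size S <= NN gamma ns L d.
Proof.
elim: L => [|L IH] ns Ws bs Hns d X HX S Su HS.
  rewrite /NN /Phi /= hnorm1_he.
  apply: (@leq_trans (size [:: [::] : seq (seq bool)])) => //.
  by apply: uniq_leq_size => // t /HS [x [_ <-]]; rewrite inE.
have Hns1 : 0 < ns 1 by apply: Hns.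
have Hns' : forall l, 0 < l <= L -> 0 < ns l.+1.
  by move=> l /andP [H1 H2]; apply: Hns; apply/andP; split.
pose g := fun t : seq (seq bool) => head [::] t.
pose heads := undup (map g S).
have Hheads : forall f, f \in heads ->
    exists x, X x /\ f = ffseq (signature (Ws 0) (bs 0) x).
  move=> f; rewrite mem_undup => /mapP [t Ht ->].
  by have [x [Xx <-]] := HS t Ht; exists x.
rewrite (@size_partition _ _ g S heads) ?undup_uniq //; last first.
  by move=> t Ht; rewrite mem_undup map_f.
pose m := d.+1 + (ns 1).+1.
have Hgm : forall f, f \in heads -> minn (count id f) d < m.
  by move=> f _; have := geq_minr (count id f) d; rewrite /m; lia.
apply: (@leq_trans (\sum_(f <- heads) NN gamma (fun l => ns l.+1) L (minn (count id f) d))).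
  rewrite big_seq [X in _ <= X]big_seq; apply: leq_sum => f Hf.
  pose Sf := map behead (filter (fun t => g t == f) S).
  have : size Sf <= NN gamma (fun l => ns l.+1) L (minn (count id f) d).
    apply: (IH _ _ _ Hns' _ _ (layer_param HX (Ws 0) (bs 0) f)).
      apply: (@map_uniq _ _ (cons f)).
      have -> : map (cons f) Sf = filter (fun t => g t == f) S.
        rewrite -map_comp; transitivity (map id (filter (fun t => g t == f) S)); last exact: map_id.
        apply/eq_in_map => t; rewrite mem_filter => /andP [/eqP Hgt Ht] /=.
        have [x [_ Ex]] := HS t Ht.
        by move: Hgt; rewrite -Ex /g /= => ->.
      exact: filter_uniq.
    move=> t' /mapP [t]; rewrite mem_filter => /andP [/eqP Hgt Ht] ->.
    have [x [Xx Ex]] := HS t Ht.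
    exists (forward Ws bs x 1); split; last by rewrite -Ex.
    exists x; split => //; split => //.
    by rewrite -Hgt -Ex.
  by rewrite size_map size_filter.
rewrite (@sum_by_value _ (fun f => minn (count id f) d) (NN gamma (fun l => ns l.+1) L) heads m Hgm).
have Hsz : size (cc gamma (ns 1) d) <= m by apply: leq_trans (size_cc _ _ _) _; rewrite /m leq_addl.
have -> : NN gamma ns L.+1 d =
    \sum_(k < m) hcoef (cc gamma (ns 1) d) k * NN gamma (fun l => ns l.+1) L k.
  rewrite /NN Phi_S (@T_lin _ _ _ _ m); last first.
    by apply: leq_trans (size_phi _ _ _) _; rewrite /m leq_addl.
  by apply: eq_bigr => k _; rewrite phi_he_coef.
apply: (@abel_le m (fun k => count (fun f => minn (count id f) d == k) heads)
          (fun k => hcoef (cc gamma (ns 1) d) k) (NN gamma (fun l => ns l.+1) L)).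
  exact: (N_mono Hg Hns').
move=> J; rewrite (@tail_by_value _ (fun f => minn (count id f) d)) // -(htailE J Hsz).
have := @sig_bound R gamma Hg (ns 0) (ns 1) Hns1 d X HX (Ws 0) (bs 0) heads J (undup_uniq _) Hheads; by [].
Qed.

Theorem mainTheorem1 (R : realType) (L : nat) (ns : nat -> nat)
  (HL : 0 < L) (Hns : forall l, l <= L -> 0 < ns l)
  (Ws : forall l : nat, 'I_(ns l.+1) -> 'I_(ns l) -> R)
  (bs : forall l : nat, 'I_(ns l.+1) -> R)
  (gamma : nat -> nat -> hist) (Hgamma : inGamma R gamma) :
  #|multisigset L Ws bs| <= hnorm1 (phi_comp gamma ns L).
Proof.
pose conv := fun s : {dffun forall l : 'I_L, {ffun 'I_(ns (nat_of_ord l).+1) -> bool}} =>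
  [seq ffseq (s l) | l <- enum 'I_L].
have conv_inj : injective conv.
  move=> s t E; apply/ffunP => l; apply: ffseq_inj.
  have := congr1 (fun z => nth [::] z l) E.
  by rewrite /conv !(nth_map l) -?enumT ?size_enum_ord // ?nth_ord_enum.
have -> : #|multisigset L Ws bs| = size (map conv (enum (multisigset L Ws bs))).
  by rewrite size_map cardE.
apply: (@main_gen R gamma Hgamma L ns Ws bs _ (ns 0) (fun _ => True)).
- by move=> l /andP [_ H]; exact: Hns.
- exists (fun i j => ((i == j)%:R)%R), (fun _ => 0%R) => x _.
  by exists x => i; rewrite preact_id.
- by rewrite map_inj_uniq ?enum_uniq.
- move=> t /mapP [s]; rewrite mem_enum inE => /asboolP [x Ex] ->.
  exists x; split => //.
  rewrite msl_spec -Ex /conv -val_enum_ord -map_comp; apply: eq_map => l /=.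
  by rewrite ffunE.
Qed.
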